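(* Let $B^4\subset\mathbb{R}^4$ be an open neighbourhood of $0$ with coordinates $(x_1,y_1,x_2,y_2)$, let $k$ be a smooth nowhere vanishing function on $B^4$, and let $$\pi=k\Big((x_2^2+y_2^2)\,\partial_{x_1}\wedge\partial_{y_1}+(x_1^2+y_1^2)\,\partial_{x_2}\wedge\partial_{y_2}-(y_1y_2+x_1x_2)\,\partial_{x_1}\wedge\partial_{y_2}+(x_1x_2+y_1y_2)\,\partial_{y_1}\wedge\partial_{x_2}+(y_1x_2-x_1y_2)\,\partial_{y_1}\wedge\partial_{y_2}+(y_1x_2-x_1y_2)\,\partial_{x_1}\wedge\partial_{x_2}\Big),$$ the Poisson structure whose symplectic leaves are the (punctured) level sets of $F=(F_1,F_2)$, $F_1=x_1^2-y_1^2+x_2^2-y_2^2$, $F_2=2(x_1y_1+x_2y_2)$. Let $q=(x_1,y_1,x_2,y_2)\in B^4\setminus\{0\}$ and let $\Sigma_q$ be the symplectic leaf through $q$. Then $$\omega_{\Sigma_q}(q)=\frac{1}{k(x_1,y_1,x_2,y_2)\,(x_1^2+y_1^2+x_2^2+y_2^2)}\,\omega_{Area}(q),$$ where $\omega_{Area}$ is the area form on $\Sigma_q$ induced by the euclidean metric $dx_1^2+dy_1^2+dx_2^2+dy_2^2$ (for a suitable orientation of $\Sigma_q$ at $q$).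
   Context: For a Poisson bivector $\pi$, set $\mathcal{B}_q(\alpha)=\pi_q(\cdot,\alpha)$ for $\alpha\in T_q^*M$. The symplectic leaf $\Sigma_q$ through $q$ has $T_q\Sigma_q=\mathcal{B}_q(T_q^*M)$ and carries the symplectic form $\omega_{\Sigma_q}(q)(u,v)=\pi_q(\alpha,\beta)=\langle\alpha,v\rangle$ whenever $u=\mathcal{B}_q(\alpha)$, $v=\mathcal{B}_q(\beta)$. The given $\pi$ is the local form near a Lefschetz singularity $(z_1,z_2)\mapsto z_1^2+z_2^2$, $z_j=x_j+iy_j$. *)

(* Defs.v *)
(* concrete reals R. Points/vectors/covectors of R^4 are
   4-tuples in the coordinate order (x1, y1, x2, y2). *)
From Stdlib Require Import Reals.
Open Scope R_scope.

Definition V4 : Type := (R * R * R * R)%type.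

Definition mk4 (a b c d : R) : V4 := (a, b, c, d).
Definition c1 (v : V4) : R := let '(a, _, _, _) := v in a.
Definition c2 (v : V4) : R := let '(_, b, _, _) := v in b.
Definition c3 (v : V4) : R := let '(_, _, c, _) := v in c.
Definition c4 (v : V4) : R := let '(_, _, _, d) := v in d.

Definition dot (u v : V4) : R :=
  c1 u * c1 v + c2 u * c2 v + c3 u * c3 v + c4 u * c4 v.
Definition normsq (v : V4) : R := dot v v.

Definition vadd (u v : V4) : V4 :=
  mk4 (c1 u + c1 v) (c2 u + c2 v) (c3 u + c3 v) (c4 u + c4 v).
Definition vscale (a : R) (v : V4) : V4 :=
  mk4 (a * c1 v) (a * c2 v) (a * c3 v) (a * c4 v).

Definition open4 (B : V4 -> Prop) : Prop :=
  forall p, B p -> exists r, 0 < r /\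
    forall p', normsq (vadd p' (vscale (-1) p)) < r * r -> B p'.

(* (d_i /\ d_j)(alpha, beta) = alpha_i beta_j - alpha_j beta_i *)
Definition wedge (ai aj bi bj : R) : R := ai * bj - aj * bi.

Definition pi_biv (k : V4 -> R) (q alpha beta : V4) : R :=
  let x1 := c1 q in let y1 := c2 q in let x2 := c3 q in let y2 := c4 q in
  let a1 := c1 alpha in let a2 := c2 alpha in
  let a3 := c3 alpha in let a4 := c4 alpha in
  let b1 := c1 beta in let b2 := c2 beta in
  let b3 := c3 beta in let b4 := c4 beta in
  k q * ( (x2 ^ 2 + y2 ^ 2) * wedge a1 a2 b1 b2
        + (x1 ^ 2 + y1 ^ 2) * wedge a3 a4 b3 b4
        - (y1 * y2 + x1 * x2) * wedge a1 a4 b1 b4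
        + (x1 * x2 + y1 * y2) * wedge a2 a3 b2 b3
        + (y1 * x2 - x1 * y2) * wedge a2 a4 b2 b4
        + (y1 * x2 - x1 * y2) * wedge a1 a3 b1 b3 ).

Definition Bq (k : V4 -> R) (q alpha : V4) : V4 :=
  mk4 (pi_biv k q (mk4 1 0 0 0) alpha) (pi_biv k q (mk4 0 1 0 0) alpha)
      (pi_biv k q (mk4 0 0 1 0) alpha) (pi_biv k q (mk4 0 0 0 1) alpha).

(* T_q Sigma_q = B_q(T_q^* M) *)
Definition tangent_leaf (k : V4 -> R) (q u : V4) : Prop :=
  exists alpha, u = Bq k q alpha.

(* the symplectic form of the leaf at q:
   omega_leaf k q u v w  <->  w = omega_{Sigma_q}(q)(u, v),
   i.e. w = pi_q(alpha, beta) for some alpha, beta with u = B_q alpha,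
   v = B_q beta. *)
Definition omega_leaf (k : V4 -> R) (q u v : V4) (w : R) : Prop :=
  exists alpha beta, u = Bq k q alpha /\ v = Bq k q beta /\
    w = pi_biv k q alpha beta.

(* Area form of the oriented euclidean 2-plane with positively oriented
   orthonormal basis (e1, e2): (u, v) |-> det of coordinates in (e1, e2). *)
Definition area_form (e1 e2 u v : V4) : R :=
  dot u e1 * dot v e2 - dot u e2 * dot v e1.

(* Main.v *)
Require Import Defs.
From Stdlib Require Import Reals Lra Nsatz.
Open Scope R_scope.

Lemma tuple_eq (a b c d a' b' c' d' : R) :
  a = a' -> b = b' -> c = c' -> d = d' -> (a, b, c, d) = (a', b', c', d').
Proof. intros -> -> -> ->; reflexivity. Qed.

Theorem proposition3p1
  (B : V4 -> Prop) (k : V4 -> R)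
  (HBopen : open4 B) (HB0 : B (mk4 0 0 0 0))
  (Hk : forall p, B p -> k p <> 0)
  (q : V4) (Hq : B q) (Hq0 : q <> mk4 0 0 0 0) :
  exists e1 e2 : V4,
    (* (e1, e2) is an orthonormal basis of T_q Sigma_q (fixing an orientation) *)
    tangent_leaf k q e1 /\ tangent_leaf k q e2 /\
    dot e1 e1 = 1 /\ dot e2 e2 = 1 /\ dot e1 e2 = 0 /\
    (forall u, tangent_leaf k q u ->
       exists a b, u = vadd (vscale a e1) (vscale b e2)) /\
    (* omega_{Sigma_q}(q) = 1/(k(q) |q|^2) * omega_Area(q) on T_q Sigma_q *)
    (forall u v w, tangent_leaf k q u -> tangent_leaf k q v ->
       omega_leaf k q u v w ->
       w = / (k q * normsq q) * area_form e1 e2 u v).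
Proof.
  pose proof (Hk q Hq) as Hkq.
  set (K := k q) in *.
  destruct q as [[[x1 y1] x2] y2].
  set (n := x1*x1+y1*y1+x2*x2+y2*y2).
  assert (Hn : 0 < n).
  { unfold n. destruct (Req_dec x1 0); destruct (Req_dec y1 0);
    destruct (Req_dec x2 0); destruct (Req_dec y2 0);
    try (subst; exfalso; apply Hq0; reflexivity); nra. }
  set (s := sqrt n).
  assert (Hs : 0 < s) by (apply sqrt_lt_R0; exact Hn).
  set (t := / s).
  assert (Ht2 : t ^ 2 = / n).
  { unfold t, s. rewrite pow_inv. simpl. rewrite Rmult_1_r, sqrt_sqrt; lra. }
  assert (Htn : t <> 0) by (unfold t; apply Rinv_neq_0_compat; lra).
  assert (HK : K <> 0) by exact Hkq.
  exists (mk4 (-x2*t) (-y2*t) (x1*t) (y1*t)), (mk4 (y2*t) (-x2*t) (-y1*t) (x1*t)).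
  repeat split.
  - exists (mk4 (y2/(K*n)*t) (-x2/(K*n)*t) (-y1/(K*n)*t) (x1/(K*n)*t)).
    unfold Bq, pi_biv, wedge, mk4, K; simpl; fold K.
    f_equal; [f_equal; [f_equal|]|].
    all: unfold n; field; fold n; repeat split; try exact HK; lra.
  - exists (mk4 (x2/(K*n)*t) (y2/(K*n)*t) (-x1/(K*n)*t) (-y1/(K*n)*t)).
    unfold Bq, pi_biv, wedge, mk4, K; simpl; fold K.
    f_equal; [f_equal; [f_equal|]|].
    all: unfold n; field; fold n; repeat split; try exact HK; lra.
  - unfold dot; simpl. transitivity (t^2 * n); [unfold n; ring|]. rewrite Ht2; field; lra.
  - unfold dot; simpl. transitivity (t^2 * n); [unfold n; ring|]. rewrite Ht2; field; lra.
  - unfold dot; simpl. ring.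
  - intros u [alpha ->].
    exists (dot (Bq k (x1, y1, x2, y2) alpha) (mk4 (-x2*t) (-y2*t) (x1*t) (y1*t))),
      (dot (Bq k (x1, y1, x2, y2) alpha) (mk4 (y2*t) (-x2*t) (-y1*t) (x1*t))).
    destruct alpha as [[[a1 b1] a2] b2].
    unfold Bq, pi_biv, wedge, mk4, vadd, vscale, dot, K; simpl; fold K.
    apply tuple_eq.
    all: assert (Htt : t * t * (x1*x1+y1*y1+x2*x2+y2*y2) = 1) by
      (replace (t*t) with (t^2) by ring; rewrite Ht2; fold n; field; lra).
    all: clearbody t; clear -Htt; nsatz.
  - intros u v w _ _ [alpha [beta [-> [-> ->]]]].
    destruct alpha as [[[a1 b1] a2] b2].
    destruct beta as [[[c1 d1] c2] d2].
    unfold Bq, pi_biv, wedge, mk4, area_form, normsq, dot, K; simpl; fold K.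
    ring_simplify. rewrite ?Ht2. unfold n. field. repeat split; try exact HK; fold n; lra.
Qed.
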